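(* Let $A$ be a valuation ring with maximal ideal $\mathfrak m$ and residue field $k$, and assume $2\in A^\times$. Let $[u_1,\dots,u_r]$ and $[v_1,\dots,v_s]$ be possibly empty frames in $\mathbb E^n_A$ spanning quadratic submodules $U$ and $V$ respectively. Then $U^\perp\cap V^\perp$ contains a unit vector if either (i) $n\geq m_A+r+2s$; or (ii) $n\geq m_A+r+s$ and $k$ is formally real; or (iii) $n>2P(k)r+s$ and $A$ is henselian; or (iv) $n>P(k)r+s$, $A$ is henselian, and $k$ is formally real.
   Context: $\mathbb E^n_A=(A^n,q)$, $q(x)=x_1^2+\dots+x_n^2$, $B_q(x,y)=q(x+y)-q(x)-q(y)$. A unit vector is $v$ with $q(v)=1$; a frame is a finite set of unit vectors $w_i$ with $B_q(w_i,w_j)=0$ for $i\neq j$. $S^\perp=\{x:B_q(x,s)=0\ \forall s\in S\}$. A quadratic submodule is a direct summand with restricted form; a quadratic module $(V,q)$ (finitely generated projective $V$) is non-singular if $x\mapsto B_q(x,-)$ is an isomorphism $V\to\mathrm{Hom}(V,A)$. $m_A\in\mathbb Z_{\geq1}\cup\{\infty\}$ is the smallest $m$ such that every non-singular quadratic submodule $W$ of some $\mathbb E^N_A$ with $\dim_k W/\mathfrak mW\geq m$ contains a unit vector. $P(k)$ is the smallest $p\geq1$ such that every sum of squares in $k$ is a sum of $p$ squares ($\infty$ if none). A field is formally real if $-1$ is not a sum of squares. Henselian: for $f\in A[X]$, simple roots in $k$ of $\bar f$ lift to roots of $f$ in $A$. A valuation ring is a domain $A$ with fraction field $K$ such that $x\in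 A$ or $x^{-1}\in A$ for each $x\in K^\times$. *)

(* Defs.v *)
From HB Require Import structures.
From mathcomp Require Import all_boot all_order all_algebra.
From mathcomp Require Import fraction.
From mathcomp Require Import boolp.
Set Implicit Arguments. Unset Strict Implicit. Unset Printing Implicit Defensive.
Import Order.TTheory GRing.Theory Num.Theory.
Local Open Scope ring_scope.

(* Extended naturals Z_{>=0} u {oo}: [None] stands for oo. *)
Notation enat := (option nat).

Definition in_ring (A : idomainType) (x : {fraction A}) : Prop :=
  exists a : A, x = FracField.tofrac a.

Definition valuation_ring (A : idomainType) : Prop :=
  forall x : {fraction A}, x != 0 -> in_ring x \/ in_ring x^-1.

Definition maxideal (A : idomainType) : pred A :=
  [pred a | a \isn't a GRing.unit].
Arguments maxideal A : clear implicits.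

(* k is the residue field of A, presented by a surjective ring morphism
   pi : A -> k whose kernel is the maximal ideal. *)
Definition residue_map (A : idomainType) (k : fieldType)
  (pi : {rmorphism A -> k}) : Prop :=
  (forall c : k, exists a : A, pi a = c) /\
  (forall a : A, pi a = 0 <-> a \in maxideal A).

Definition henselian (A : idomainType) (k : fieldType)
  (pi : {rmorphism A -> k}) : Prop :=
  forall (f : {poly A}) (c : k),
    root (map_poly pi f) c -> ~~ root (map_poly pi f)^`() c ->
    exists a : A, root f a /\ pi a = c.

Definition sum_sq (k : fieldType) (m : nat) (x : 'I_m -> k) : k :=
  \sum_(i < m) x i ^+ 2.

Definition formally_real (k : fieldType) : Prop :=
  ~ exists (m : nat) (x : 'I_m -> k), sum_sq x = -1.

Definition pyth_bound (k : fieldType) (p : nat) : Prop :=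
  forall (m : nat) (x : 'I_m -> k), exists y : 'I_p -> k, sum_sq x = sum_sq y.

Definition Pyth (k : fieldType) : enat :=
  match pselect (exists p : nat, asbool ((1 <= p)%N /\ pyth_bound k p)) with
  | left h => Some (ex_minn h)
  | right _ => None
  end.

Definition qf (A : idomainType) (n : nat) (x : 'rV[A]_n) : A :=
  \sum_(i < n) x ord0 i ^+ 2.

Definition Bq (A : idomainType) (n : nat) (x y : 'rV[A]_n) : A :=
  qf (x + y) - qf x - qf y.

Definition unit_vector (A : idomainType) (n : nat) (x : 'rV[A]_n) : Prop :=
  qf x = 1.

Definition is_frame (A : idomainType) (n r : nat) (w : 'I_r -> 'rV[A]_n) : Prop :=
  (forall i, unit_vector (w i)) /\ (forall i j, i != j -> Bq (w i) (w j) = 0).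

Definition span_of (A : idomainType) (n r : nat) (w : 'I_r -> 'rV[A]_n)
  (x : 'rV[A]_n) : Prop :=
  exists c : 'I_r -> A, x = \sum_(i < r) c i *: w i.

Definition orth (A : idomainType) (n : nat) (S : 'rV[A]_n -> Prop)
  (x : 'rV[A]_n) : Prop :=
  forall y, S y -> Bq x y = 0.

Definition is_submodule (A : idomainType) (N : nat) (W : 'rV[A]_N -> Prop) : Prop :=
  [/\ W 0, (forall x y, W x -> W y -> W (x + y)) &
      (forall (a : A) x, W x -> W (a *: x))].

Definition quadratic_submodule (A : idomainType) (N : nat) (W : 'rV[A]_N -> Prop) : Prop :=
  is_submodule W /\
  exists W' : 'rV[A]_N -> Prop,
    [/\ is_submodule W', (forall x, W x -> W' x -> x = 0) &
        (forall z, exists x y, [/\ W x, W' y & z = x + y])].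

Definition nonsingular (A : idomainType) (N : nat) (W : 'rV[A]_N -> Prop) : Prop :=
  (forall x, W x -> (forall w, W w -> Bq x w = 0) -> x = 0) /\
  (forall f : 'rV[A]_N -> A,
     (forall (a : A) x y, W x -> W y -> f (a *: x + y) = a * f x + f y) ->
     exists x, W x /\ forall w, W w -> Bq x w = f w).

Definition in_mW (A : idomainType) (N : nat) (W : 'rV[A]_N -> Prop)
  (y : 'rV[A]_N) : Prop :=
  exists (l : nat) (c : 'I_l -> A) (x : 'I_l -> 'rV[A]_N),
    [/\ forall j, c j \in maxideal A, forall j, W (x j) &
        y = \sum_(j < l) c j *: x j].

(* dim_k W/mW = d : there are w_1..w_d in W whose classes form a k-basis of
   W/mW (k acting through A -> A/m). *)
Definition res_dim (A : idomainType) (N : nat) (W : 'rV[A]_N -> Prop) (d : nat) : Prop :=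
  exists w : 'I_d -> 'rV[A]_N,
    [/\ forall i, W (w i),
        (forall y, W y -> exists a : 'I_d -> A,
                    in_mW W (y - \sum_(i < d) a i *: w i)) &
        (forall a : 'I_d -> A, in_mW W (\sum_(i < d) a i *: w i) ->
                    forall i, a i \in maxideal A)].

Definition mA_good (A : idomainType) (m : nat) : Prop :=
  forall (N : nat) (W : 'rV[A]_N -> Prop),
    quadratic_submodule W -> nonsingular W ->
    (exists d, res_dim W d /\ (m <= d)%N) ->
    exists x, W x /\ unit_vector x.

Definition mA (A : idomainType) : enat :=
  match pselect (exists m : nat, asbool ((1 <= m)%N /\ mA_good A m)) with
  | left h => Some (ex_minn h)
  | right _ => None
  end.

(* Main.v *)
Require Import Defs.
From HB Require Import structures.
From mathcomp Require Import all_boot all_order all_algebra.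
From mathcomp Require Import fraction boolp.
From mathcomp Require Import ring zify.
Set Implicit Arguments. Unset Strict Implicit. Unset Printing Implicit Defensive.
Import GRing.Theory.
Local Open Scope ring_scope.

Lemma mA_some (A : idomainType) m : mA A = Some m -> mA_good A m.
Proof.
rewrite /mA; case: pselect => // h [<-]; case: ex_minnP => m' /asboolP [_ g] _; exact: g.
Qed.

Lemma Pyth_some (k : fieldType) p : Pyth k = Some p -> pyth_bound k p.
Proof.
rewrite /Pyth; case: pselect => // h [<-]; case: ex_minnP => m' /asboolP [_ g] _; exact: g.
Qed.

Section Main.
Variable A : idomainType.
Variable k : fieldType.
Variable pi : {rmorphism A -> k}.
Hypothesis Hk : residue_map pi.
Hypothesis H2 : (2%:R : A) \is a GRing.unit.
Variable n : nat.

Definition dot (x y : 'rV[A]_n) : A := (x *m y^T) 0 0.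

Lemma dotE x y : dot x y = \sum_i x 0 i * y 0 i.
Proof. by rewrite /dot mxE; apply: eq_bigr => i _; rewrite mxE. Qed.

Lemma dotC x y : dot x y = dot y x.
Proof. by rewrite !dotE; apply: eq_bigr => i _; rewrite mulrC. Qed.

Lemma dotDl x y z : dot (x + y) z = dot x z + dot y z.
Proof. by rewrite /dot mulmxDl mxE. Qed.
Lemma dotZl a x z : dot (a *: x) z = a * dot x z.
Proof. by rewrite /dot -scalemxAl mxE. Qed.
Lemma dotNl x z : dot (- x) z = - dot x z.
Proof. by rewrite /dot mulNmx mxE. Qed.
Lemma dotBl x y z : dot (x - y) z = dot x z - dot y z.
Proof. by rewrite dotDl dotNl. Qed.
Lemma dot0l z : dot 0 z = 0.
Proof. by rewrite /dot mul0mx mxE. Qed.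
Lemma dotDr x y z : dot z (x + y) = dot z x + dot z y.
Proof. by rewrite dotC dotDl !(dotC z). Qed.
Lemma dotZr a x z : dot z (a *: x) = a * dot z x.
Proof. by rewrite dotC dotZl dotC. Qed.
Lemma dotNr x z : dot z (- x) = - dot z x.
Proof. by rewrite dotC dotNl dotC. Qed.
Lemma dotBr x y z : dot z (x - y) = dot z x - dot z y.
Proof. by rewrite dotDr dotNr. Qed.
Lemma dot0r z : dot z 0 = 0.
Proof. by rewrite dotC dot0l. Qed.

Lemma dot_suml (I : Type) (s : seq I) (P : pred I) (F : I -> 'rV[A]_n) z :
  dot (\sum_(i <- s | P i) F i) z = \sum_(i <- s | P i) dot (F i) z.
Proof.
elim/big_rec2: _ => [|i y1 y2 _ <-]; first by rewrite dot0l.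
by rewrite dotDl.
Qed.
Lemma dot_sumr (I : Type) (s : seq I) (P : pred I) (F : I -> 'rV[A]_n) z :
  dot z (\sum_(i <- s | P i) F i) = \sum_(i <- s | P i) dot z (F i).
Proof. rewrite dotC dot_suml; apply: eq_bigr => i _; exact: dotC. Qed.

Lemma dotQ (Q : 'M[A]_n) x y : Q *m Q^T = 1%:M -> dot (x *m Q) (y *m Q) = dot x y.
Proof. by move=> HQ; rewrite /dot trmx_mul mulmxA -(mulmxA x) HQ mulmx1. Qed.

Lemma qfE x : qf x = dot x x.
Proof. by rewrite /qf dotE; apply: eq_bigr => i _; rewrite expr2. Qed.

Lemma BqE x y : Bq x y = 2%:R * dot x y.
Proof.
rewrite /Bq !qfE dotDl !dotDr (dotC y x).
ring.
Qed.

Lemma two_neq0 : (2%:R : A) != 0.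
Proof. by apply/eqP=> h; move: H2; rewrite h unitr0. Qed.

Lemma Bq0 x y : (Bq x y = 0) <-> (dot x y = 0).
Proof.
rewrite BqE; split=> [/eqP|->]; last by rewrite mulr0.
by rewrite mulf_eq0 (negPf two_neq0) => /eqP.
Qed.

Lemma unitE a : (a \is a GRing.unit) = (pi a != 0).
Proof.
case: Hk => _ H; apply/idP/idP => [ha|].
  by apply/eqP => /H; rewrite /maxideal inE ha.
by apply: contraR => ha; apply/eqP/H; rewrite /maxideal inE.
Qed.


Definition ofam (R : seq 'rV[A]_n) : bool :=
  pairwise (fun a b => dot a b == 0) R && all (fun a => dot a a \is a GRing.unit) R.
Definition perp (R : seq 'rV[A]_n) x : Prop := forall r, r \in R -> dot x r = 0.
Definition proj (R : seq 'rV[A]_n) x := \sum_(r <- R) (dot x r / dot r r) *: r.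

Lemma proj_perp R x y : perp R y -> dot (proj R x) y = 0.
Proof.
move=> hy; rewrite /proj dot_suml big1_seq // => r /= hr.
by rewrite dotZl (dotC r y) hy ?mulr0.
Qed.

Lemma ofam_cons a R : ofam (a :: R) =
  [&& dot a a \is a GRing.unit, all (fun b => dot a b == 0) R & ofam R].
Proof.
rewrite /ofam pairwise_cons /=.
by case: (dot a a \is a GRing.unit); case: (all _ R); case: (pairwise _ R); case: (all _ R).
Qed.

Lemma dot_proj R x r : ofam R -> r \in R -> dot (proj R x) r = dot x r.
Proof.
elim: R => [|a R IH] //; rewrite ofam_cons => /and3P [ua /allP ha oR].
rewrite /proj big_cons -/(proj R x) dotDl dotZl in_cons => /orP [/eqP hra|hr].
  subst r; rewrite proj_perp ?addr0 ?divrK //.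
  by move=> b hb; apply/eqP; exact: ha.
by rewrite IH // (eqP (ha r hr)) mulr0 add0r.
Qed.

Lemma perp_sub R x : ofam R -> perp R (x - proj R x).
Proof. by move=> oR r hr; rewrite dotBl dot_proj // subrr. Qed.

Lemma perp_proj R x : ofam R -> perp R x -> proj R x = 0.
Proof.
move=> oR hx; rewrite /proj big1_seq // => r /= hr.
by rewrite hx // mul0r scale0r.
Qed.


Hypothesis HA : valuation_ring A.

Lemma dvd_total (a b : A) : (exists c, b = c * a) \/ (exists c, a = c * b).
Proof.
have [->|a0] := eqVneq a 0; first by right; exists 0; rewrite mul0r.
have [->|b0] := eqVneq b 0; first by left; exists 0; rewrite mul0r.
have fa0 : FracField.tofrac a != 0 by rewrite tofrac_eq0.
have fb0 : FracField.tofrac b != 0 by rewrite tofrac_eq0.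
have x0 : FracField.tofrac a / FracField.tofrac b != 0.
  by rewrite mulf_neq0 ?invr_eq0.
case: (HA x0) => [[c hc]|[c hc]].
  right; exists c; apply/eqP; rewrite -tofrac_eq tofracM -hc divfK //.
left; exists c; apply/eqP; rewrite -tofrac_eq tofracM -hc invf_div divfK //.
Qed.

Lemma primitive (w : 'rV[A]_n) : w != 0 ->
  exists (c : A) (w0 : 'rV[A]_n) (k0 : 'I_n), [/\ w = c *: w0, w0 0 k0 = 1 & c != 0].
Proof.
move=> w0n.
have [j0 _] : exists j0 : 'I_n, w 0 j0 != 0.
  apply/existsP; apply: contraR w0n => /existsPn h; apply/eqP/rowP => j.
  by rewrite mxE; apply/eqP; move: (h j); rewrite negbK.
have key : forall s : seq 'I_n, exists k0, forall i, i \in j0 :: s -> exists c, w 0 i = c * w 0 k0.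
  elim=> [|i s [k1 IH]].
    by exists j0 => i; rewrite inE => /eqP ->; exists 1; rewrite mul1r.
  case: (dvd_total (w 0 k1) (w 0 i)) => [[c hc]|[c hc]].
    exists k1 => j; rewrite !inE => /or3P [hj|/eqP ->|hj].
    - by apply: IH; rewrite inE hj.
    - by exists c.
    - by apply: IH; rewrite inE hj orbT.
  exists i => j; rewrite !inE => /or3P [hj|/eqP ->|hj].
  - have [c' ->] : exists c', w 0 j = c' * w 0 k1 by apply: IH; rewrite inE hj.
    by exists (c' * c); rewrite hc mulrA.
  - by exists 1; rewrite mul1r.
  - have [c' ->] : exists c', w 0 j = c' * w 0 k1 by apply: IH; rewrite inE hj orbT.
    by exists (c' * c); rewrite hc mulrA.
have [k0 hk0] := key (enum 'I_n).
have /choice [f hf] : forall i, exists c, w 0 i = c * w 0 k0.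
  by move=> i; apply: hk0; rewrite inE mem_enum orbT.
have wk0 : w 0 k0 != 0.
  apply: contra w0n => /eqP h; apply/eqP/rowP => j; rewrite mxE hf h mulr0 //.
exists (w 0 k0), (\row_i f i), k0; split => //.
  by apply/rowP => j; rewrite !mxE hf mulrC.
rewrite mxE; apply: (mulIf wk0); rewrite mul1r -hf //.
Qed.


Lemma ofam_cat R E : ofam (R ++ E) =
  [&& ofam R, ofam E & allrel (fun a b => dot a b == 0) R E].
Proof.
rewrite /ofam pairwise_cat all_cat.
by case: (allrel _ R E); case: (pairwise _ R); case: (pairwise _ E);
   case: (all _ R); case: (all _ E).
Qed.

Lemma perpD R a b : perp R a -> perp R b -> perp R (a + b).
Proof. by move=> ha hb r hr; rewrite dotDl ha ?hb ?addr0. Qed.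
Lemma perpZ R c a : perp R a -> perp R (c *: a).
Proof. by move=> ha r hr; rewrite dotZl ha ?mulr0. Qed.
Lemma perpB R a b : perp R a -> perp R b -> perp R (a - b).
Proof. by move=> ha hb r hr; rewrite dotBl ha ?hb ?subrr. Qed.
Lemma perp_catl R E x : perp (R ++ E) x -> perp R x.
Proof. by move=> h r hr; apply: h; rewrite mem_cat hr. Qed.
Lemma perp_catr R E x : perp (R ++ E) x -> perp E x.
Proof. by move=> h r hr; apply: h; rewrite mem_cat hr orbT. Qed.

Lemma dot_delta x (j : 'I_n) : dot x (delta_mx 0 j) = x 0 j.
Proof. by rewrite /dot trmx_delta -colE mxE. Qed.

Lemma pi_dot x : pi (dot x x) = \sum_i pi (x 0 i) ^+ 2.
Proof. by rewrite dotE rmorph_sum; apply: eq_bigr => i _; rewrite rmorphM expr2. Qed.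

Lemma fr_prim (w0 : 'rV[A]_n) (k0 : 'I_n) : formally_real k -> w0 0 k0 = 1 ->
  dot w0 w0 \is a GRing.unit.
Proof.
move=> fr h1; rewrite unitE; apply/negP => /eqP h0; apply: fr.
exists n, (fun i => if i == k0 then 0 else pi (w0 0 i)).
rewrite /sum_sq (bigD1 k0) //= eqxx expr0n add0r.
rewrite (eq_bigr (fun i => pi (w0 0 i) ^+ 2)); last by move=> i /negPf ->.
move: h0; rewrite pi_dot (bigD1 k0) //= h1 rmorph1 expr1n => /eqP.
by rewrite addrC addr_eq0 => /eqP.
Qed.

Lemma cut R w : ofam R -> exists E, [/\ ofam (R ++ E), (size E <= 2)%N,
   (formally_real k -> (size E <= 1)%N) & forall x, perp (R ++ E) x -> dot x w = 0].
Proof.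
move=> oR.
pose w' := w - proj R w.
have pw' : perp R w' by exact: perp_sub.
suff [E [oE sE fE hE]] : exists E, [/\ ofam (R ++ E), (size E <= 2)%N,
   (formally_real k -> (size E <= 1)%N) & forall x, perp (R ++ E) x -> dot x w' = 0].
  exists E; split => // x hx; have := hE x hx.
  rewrite /w' dotBr (dotC x (proj R w)) proj_perp ?subr0 //.
  exact: perp_catl hx.
have [w'0|w'n0] := eqVneq w' 0.
  exists [::]; rewrite cats0; split => // x _; by rewrite w'0 dot0r.
have [c [w0 [k0 [ew' w0k c0]]]] := primitive w'n0.
have pw0 : perp R w0.
  move=> r hr; move: (pw' r hr); rewrite ew' dotZl => /eqP.
  by rewrite mulf_eq0 (negPf c0) => /eqP.
have fin : forall x, dot x w0 = 0 -> dot x w' = 0.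
  by move=> x hx; rewrite ew' dotZr hx mulr0.
have [uw0|nuw0] := boolP (dot w0 w0 \is a GRing.unit).
  exists [:: w0]; split => //.
  - rewrite ofam_cat oR /ofam /= uw0 /=; apply/allrelP => a b ha.
    by rewrite inE => /eqP ->; rewrite dotC pw0.
  - by move=> x hx; apply: fin; apply: hx; rewrite mem_cat inE eqxx orbT.
have gam : pi (dot w0 w0) = 0 by apply/eqP; move: nuw0; rewrite unitE negbK.
pose y := delta_mx 0 k0 - proj R (delta_mx 0 k0).
have py : perp R y by exact: perp_sub.
have w0y : dot w0 y = 1.
  by rewrite /y dotBr dot_delta w0k (dotC w0) proj_perp // subr0.
clearbody y.
pose z1 := if dot y y \is a GRing.unit then y else w0 + y.
have pz1 : perp R z1 by rewrite /z1; case: ifP => _ //; exact: perpD.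
have [uz1 mu1] : dot z1 z1 \is a GRing.unit /\ pi (dot w0 z1) = 1.
  rewrite /z1; case: ifP => [->|]; first by rewrite w0y rmorph1.
  move/negbT; rewrite unitE negbK => /eqP hy.
  rewrite (dotDr w0 y w0) w0y rmorphD gam rmorph1 add0r; split => //.
  have -> : dot (w0 + y) (w0 + y) = dot w0 w0 + 2%:R * dot w0 y + dot y y.
    by rewrite dotDl !dotDr (dotC y w0); ring.
  by rewrite unitE rmorphD rmorphD hy gam w0y mulr1 add0r addr0 -unitE.
pose a := dot w0 z1 / dot z1 z1.
pose z2 := w0 - a *: z1.
have pz2 : perp R z2 by apply: perpB => //; exact: perpZ.
have z21 : dot z2 z1 = 0 by rewrite /z2 dotBl dotZl /a divrK // subrr.
have uz2 : dot z2 z2 \is a GRing.unit.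
  have e : dot z2 z2 * dot z1 z1 = dot w0 w0 * dot z1 z1 - dot w0 z1 ^+ 2.
    have ha : dot w0 z1 = a * dot z1 z1 by rewrite /a divrK.
    rewrite /z2 !dotBl !dotBr !dotZl !dotZr (dotC z1 w0) ha; ring.
  move: e => /(congr1 pi); rewrite rmorphB !rmorphM mu1 gam mul0r mulr1 sub0r.
  move=> e; rewrite unitE; apply/eqP => h; move: e; rewrite h mul0r => /eqP.
  by rewrite eq_sym oppr_eq0 oner_eq0.
exists [:: z1; z2]; split => //.
- rewrite ofam_cat oR /ofam /= uz1 uz2 dotC z21 eqxx /=; apply/allrelP => b e hb.
  by rewrite !inE => /orP [] /eqP ->; rewrite dotC ?pz1 ?pz2.
- by move=> fr; case/negP: nuw0; exact: fr_prim fr w0k.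
- move=> x hx; apply: fin.
  have -> : w0 = z2 + a *: z1 by rewrite /z2 subrK.
  by rewrite dotDr dotZr !hx ?mulr0 ?addr0 // mem_cat !inE eqxx ?orbT.
Qed.


Lemma cut_many (ws : seq 'rV[A]_n) R : ofam R -> exists E, [/\ ofam (R ++ E),
   (size E <= 2 * size ws)%N, (formally_real k -> (size E <= size ws)%N) &
   forall x, perp (R ++ E) x -> forall w, w \in ws -> dot x w = 0].
Proof.
elim: ws R => [|w ws IH] R oR.
  by exists [::]; rewrite cats0; split.
have [E1 [o1 s1 f1 h1]] := cut w oR.
have [E2 [o2 s2 f2 h2]] := IH _ o1.
exists (E1 ++ E2); rewrite catA; split => //.
- rewrite size_cat /=; lia.
- move=> fr; rewrite size_cat /=; have := f1 fr; have := f2 fr; lia.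
- move=> x hx w'; rewrite inE => /orP [/eqP ->|hw]; last exact: h2.
  by apply: h1; exact: perp_catl hx.
Qed.


Lemma unit_neq0 (a : A) : a \is a GRing.unit -> a != 0.
Proof. by apply: contraL => /eqP ->; rewrite unitr0. Qed.

Lemma basis R : ofam R -> exists d, (d + size R)%N = n /\ exists B : 'I_d -> 'rV[A]_n,
  [/\ forall i, perp R (B i),
      forall y, perp R y -> exists a : 'I_d -> A, y = \sum_i a i *: B i
    & forall a : 'I_d -> A, \sum_i a i *: B i = 0 -> forall i, a i = 0].
Proof.
elim: R => [|r R IH].
  exists n; split; first by rewrite addn0.
  exists (fun i => delta_mx 0 i); split => //.
    by move=> y _; exists (fun i => y 0 i); exact: row_sum_delta.
  move=> a ha i; move/rowP: ha => /(_ i); rewrite summxE mxE (bigD1 i) //= big1.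
    by rewrite !mxE !eqxx mulr1 addr0.
  by move=> j ji; rewrite !mxE eq_sym (negPf ji) mulr0.
rewrite ofam_cons => /and3P [ur /allP hr oR].
have [d [hd [B [hB1 hB2 hB3]]]] := IH oR.
have pr : perp R r by move=> b hb; apply/eqP; exact: hr.
have [c ec] := hB2 r pr.
have [k0 uk0] : exists k0, c k0 \is a GRing.unit.
  apply/existsP; apply: contraLR ur => /existsPn hc.
  rewrite unitE negbK {2}ec dot_sumr rmorph_sum; apply/eqP; apply: big1 => i _.
  by rewrite dotZr rmorphM; move: (hc i); rewrite unitE negbK => /eqP ->; rewrite mul0r.
destruct d as [|d]; first by move: (ltn_ord k0).
exists d; split; first by rewrite /= addnS.
pose lam j := dot (B (lift k0 j)) r / dot r r.
pose B' j := B (lift k0 j) - lam j *: r.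
have pB' : forall j, perp (r :: R) (B' j).
  move=> j b; rewrite inE => /orP [/eqP ->|hb].
    by rewrite /B' dotBl dotZl /lam divrK // subrr.
  by rewrite /B' dotBl dotZl hB1 // pr // mulr0 subrr.
have B'r : forall j, dot (B' j) r = 0 by move=> j; apply: pB'; rewrite inE eqxx.
exists B'; split => //.
  move=> y hy.
  have pyR : perp R y by move=> b hb; apply: hy; rewrite inE hb orbT.
  have [a ea] := hB2 y pyR.
  pose t := a k0 / c k0.
  pose al j := a (lift k0 j) - t * c (lift k0 j).
  exists al.
  pose sig := \sum_j al j * lam j.
  have key : y - \sum_j al j *: B' j = (t + sig) *: r.
    have eT : \sum_j al j *: B' j = \sum_j a (lift k0 j) *: B (lift k0 j)
       - t *: \sum_j c (lift k0 j) *: B (lift k0 j) - sig *: r.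
      rewrite /sig scaler_suml scaler_sumr -!sumrB; apply: eq_bigr => j _.
      rewrite /B' /al; apply/rowP => i; rewrite !mxE; ring.
    have ey : y = a k0 *: B k0 + \sum_j a (lift k0 j) *: B (lift k0 j).
      by rewrite ea (bigD1_ord k0).
    have er : \sum_j c (lift k0 j) *: B (lift k0 j) = r - c k0 *: B k0.
      by rewrite ec (bigD1_ord k0) //= addrC addrK.
    have eat : a k0 = t * c k0 by rewrite /t divrK.
    rewrite eT er {1}ey; clearbody t sig; rewrite eat.
    apply/rowP => j; rewrite !mxE; ring.
  have : dot (y - \sum_j al j *: B' j) r = 0.
    rewrite dotBl dot_suml big1 ?subr0; first by apply: hy; rewrite inE eqxx.
    by move=> j _; rewrite dotZl B'r mulr0.
  rewrite key dotZl => /eqP; rewrite mulf_eq0 (negPf (unit_neq0 ur)) orbF => /eqP h0.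
  by apply/eqP; rewrite -subr_eq0 key h0 scale0r.
move=> a ha.
pose mu := \sum_j a j * lam j.
pose a2 i := (if unlift k0 i is Some j then a j else 0) - mu * c i.
have h2 : \sum_i a2 i *: B i = 0.
  have -> : \sum_i a2 i *: B i = \sum_i (if unlift k0 i is Some j then a j else 0) *: B i
      - mu *: \sum_i c i *: B i.
    rewrite scaler_sumr -sumrB; apply: eq_bigr => i _; by rewrite /a2 scalerBl scalerA.
  rewrite -ec (bigD1_ord k0) //= unlift_none scale0r add0r.
  rewrite -[X in _ = X]ha /B' /mu.
  under eq_bigr do rewrite liftK.
  rewrite scaler_suml -sumrB; apply: eq_bigr => j _.
  by rewrite scalerBr scalerA.
have hmu : mu = 0.
  move: (hB3 _ h2 k0); rewrite /a2 unlift_none sub0r => /eqP; rewrite oppr_eq0 mulf_eq0.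
  by rewrite (negPf (unit_neq0 uk0)) orbF => /eqP.
move=> j; move: (hB3 _ h2 (lift k0 j)); rewrite /a2 liftK hmu mul0r subr0 //.
Qed.


Lemma projD R x y : proj R (x + y) = proj R x + proj R y.
Proof. by rewrite /proj -big_split; apply: eq_bigr => r _; rewrite dotDl mulrDl scalerDl. Qed.
Lemma projZ R a x : proj R (a *: x) = a *: proj R x.
Proof. by rewrite /proj scaler_sumr; apply: eq_bigr => r _; rewrite dotZl scalerA mulrA. Qed.
Lemma proj0 R : proj R 0 = 0.
Proof. by rewrite /proj big1 // => r _; rewrite dot0l mul0r scale0r. Qed.
Lemma proj_lin R (I : Type) (s : seq I) (c : I -> A) (F : I -> 'rV[A]_n) :
  proj R (\sum_(i <- s) c i *: F i) = \sum_(i <- s) c i *: proj R (F i).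
Proof.
elim: s => [|i s IH]; first by rewrite !big_nil proj0.
by rewrite !big_cons projD projZ IH.
Qed.

Lemma W_qsub R : ofam R -> quadratic_submodule (perp R).
Proof.
move=> oR; split.
  split; first by move=> r _; rewrite dot0l.
    by move=> x y; exact: perpD.
  by move=> a x; exact: perpZ.
exists (fun x => proj R x = x); split.
- split; first by rewrite proj0.
    by move=> x y hx hy; rewrite projD hx hy.
  by move=> a x hx; rewrite projZ hx.
- by move=> x hx hx'; rewrite -hx' perp_proj.
- move=> z; exists (z - proj R z), (proj R z); split; first exact: perp_sub.
    rewrite /proj; apply: eq_big_seq => r hr.
    by rewrite -/(proj R z) dot_proj.
  by rewrite subrK.
Qed.

Lemma W_nonsing R : ofam R -> nonsingular (perp R).
Proof.
move=> oR; split.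
  move=> x hx h; apply/rowP => j; rewrite mxE.
  have := h (delta_mx 0 j - proj R (delta_mx 0 j)) (perp_sub _ oR).
  by move/Bq0; rewrite dotBr dot_delta (dotC x) proj_perp // subr0.
move=> f hf.
have f0 : f 0 = 0.
  have := hf 1 0 0 (fun r _ => dot0l r) (fun r _ => dot0l r).
  by rewrite scale1r addr0 mul1r => h; apply: (@addrI _ (f 0)); rewrite addr0 -h.
have fsum : forall (s : seq 'I_n) (c : 'I_n -> A) (F : 'I_n -> 'rV[A]_n),
    (forall i, perp R (F i)) -> f (\sum_(i <- s) c i *: F i) = \sum_(i <- s) c i * f (F i).
  move=> s c F hF; elim: s => [|i s IH]; first by rewrite !big_nil f0.
  rewrite !big_cons hf ?IH //.
  elim: s {IH} => [|j s IH]; first by rewrite big_nil => r _; rewrite dot0l.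
  by rewrite big_cons; apply: perpD => //; exact: perpZ.
pose b j := delta_mx 0 j - proj R (delta_mx 0 j).
have pb : forall j, perp R (b j) by move=> j; exact: perp_sub.
pose x0 := \row_j (f (b j) / 2%:R).
exists (x0 - proj R x0); split; first exact: perp_sub.
move=> w hw; rewrite BqE dotBl proj_perp // subr0.
have ew : w = \sum_j w 0 j *: b j.
  rewrite /b; under eq_bigr do rewrite scalerBr.
  rewrite sumrB -proj_lin -row_sum_delta perp_proj // subr0 //.
rewrite {2}ew fsum // dotE mulr_sumr; apply: eq_bigr => j _.
by rewrite mxE mulrA [2%:R * _]mulrC divrK // mulrC.
Qed.

Lemma res_dim_basis (W : 'rV[A]_n -> Prop) d (B : 'I_d -> 'rV[A]_n) :
  (forall i, W (B i)) ->
  (forall y, W y -> exists a : 'I_d -> A, y = \sum_i a i *: B i) ->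
  (forall a : 'I_d -> A, \sum_i a i *: B i = 0 -> forall i, a i = 0) ->
  res_dim W d.
Proof.
move=> h1 h2 h3; exists B; split => //.
  move=> y hy; have [a ea] := h2 y hy; exists a.
  exists 0%N, (fun _ => 0), (fun _ => 0); split; try by case.
  by rewrite big_ord0 ea subrr.
move=> a [l [c [x [hc hx ex]]]].
have /choice [be hbe] : forall j : 'I_l, exists bj : 'I_d -> A, x j = \sum_i bj i *: B i.
  by move=> j; exact: h2.
pose g i := \sum_j c j * be j i.
have e : \sum_i (a i - g i) *: B i = 0.
  under eq_bigr do rewrite scalerBl.
  rewrite sumrB ex; apply/eqP; rewrite subr_eq0; apply/eqP.
  under eq_bigr do rewrite hbe scaler_sumr.
  rewrite exchange_big /=; apply: eq_bigr => i _.
  by rewrite /g scaler_suml; apply: eq_bigr => j _; rewrite scalerA.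
move=> i; have := h3 _ e i; move/eqP; rewrite subr_eq0 => /eqP ->.
case: Hk => _ H; apply/H; rewrite /g rmorph_sum big1 // => j _.
by rewrite rmorphM; move: (hc j) => /H ->; rewrite mul0r.
Qed.


Lemma hensel_sq (hen : henselian pi) (a b : A) : pi a = pi b -> pi b != 0 ->
  exists l, b * l ^+ 2 = a.
Proof.
move=> hab hb.
have e : map_poly pi (b *: 'X^2 - a%:P) = pi b *: 'X^2 - (pi a)%:P.
  by rewrite rmorphB /= map_polyZ map_polyXn map_polyC.
have r1 : root (map_poly pi (b *: 'X^2 - a%:P)) 1.
  by rewrite /root e !hornerE /= !mulr1 hab subrr.
have r2 : ~~ root (map_poly pi (b *: 'X^2 - a%:P))^`() 1.
  rewrite /root e derivB derivZ derivXn derivC subr0 !hornerE /=.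
  have h2 : pi 2%:R != 0 by rewrite -unitE.
  rewrite mulf_neq0 //; move: h2; by rewrite rmorphD rmorph1.
have [l [hl _]] := hen _ _ r1 r2.
by exists l; apply/eqP; rewrite -subr_eq0; move: hl; rewrite /root !hornerE.
Qed.


Definition refl (w : 'rV[A]_n) : 'M[A]_n := 1%:M - (2%:R / dot w w) *: (w^T *m w).

Lemma refl_apply x w : x *m refl w = x - (2%:R / dot w w * dot x w) *: w.
Proof.
rewrite /refl mulmxBr mulmx1 -scalemxAr mulmxA.
by rewrite [x *m w^T]mx11_scalar mul_scalar_mx scalerA.
Qed.

Lemma refl_tr w : (refl w)^T = refl w.
Proof. by rewrite /refl linearB /= linearZ /= trmx1 trmx_mul trmxK. Qed.

Lemma refl_orth w : dot w w \is a GRing.unit -> refl w *m (refl w)^T = 1%:M.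
Proof.
move=> uw; rewrite refl_tr; apply/row_matrixP => i; rewrite !rowE mulmxA.
set x := delta_mx 0 i; rewrite mulmx1 !refl_apply.
rewrite dotBl dotZl; set c := 2%:R / dot w w.
have hc : c * dot w w = 2%:R by rewrite /c divrK.
apply/rowP => j; rewrite !mxE.
have -> : dot x w - c * dot x w * dot w w = - dot x w.
  by rewrite -mulrA (mulrC (dot x w)) mulrA hc; ring.
ring.
Qed.

Lemma orth_mul (P Q : 'M[A]_n) : P *m P^T = 1%:M -> Q *m Q^T = 1%:M ->
  (P *m Q) *m (P *m Q)^T = 1%:M.
Proof.
by move=> hP hQ; rewrite trmx_mul mulmxA -(mulmxA P) hQ mulmx1 hP.
Qed.

Lemma reflect (z y : 'rV[A]_n) : dot z z = dot y y -> dot z z \is a GRing.unit ->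
  exists Q : 'M[A]_n, [/\ Q *m Q^T = 1%:M, z *m Q = y &
    forall x, dot x z = 0 -> dot x y = 0 -> x *m Q = x].
Proof.
move=> ezy uz.
have e1 : forall u, dot u u \is a GRing.unit -> forall D, dot u u = 2%:R * D ->
    2%:R / dot u u * D = 1.
  by move=> u uu D hD; rewrite mulrAC -hD mulrV.
have [u1|nu1] := boolP (dot (z - y) (z - y) \is a GRing.unit).
  exists (refl (z - y)); split; first exact: refl_orth.
    rewrite refl_apply (e1 _ u1 (dot z (z - y))); first by rewrite scale1r subKr.
    rewrite !dotBl !dotBr (dotC y z) -ezy; ring.
  by move=> x h1 h2; rewrite refl_apply (dotBr z y x) h1 h2 subrr mulr0 scale0r subr0.
have u2 : dot (z + y) (z + y) \is a GRing.unit.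
  have e : dot (z + y) (z + y) = 2%:R * 2%:R * dot z z - dot (z - y) (z - y).
    rewrite !dotBl !dotBr !dotDl !dotDr (dotC y z) -ezy; ring.
  move: nu1; rewrite e !unitE negbK => /eqP h.
  rewrite rmorphB h subr0 !rmorphM !mulf_neq0 // -unitE //.
have uy : dot y y \is a GRing.unit by rewrite -ezy.
exists (refl (z + y) *m refl y); split.
- by apply: orth_mul; exact: refl_orth.
- rewrite mulmxA (refl_apply z) (e1 _ u2 (dot z (z + y))).
    rewrite scale1r opprD addrA subrr sub0r refl_apply dotNl mulrN divrK //.
    by apply/rowP => j; rewrite !mxE; ring.
  rewrite !dotDl !dotDr (dotC y z) -ezy; ring.
- move=> x h1 h2; rewrite mulmxA (refl_apply x) (dotDr z y x) h1 h2 addr0 mulr0 scale0r subr0.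
  by rewrite refl_apply h2 mulr0 scale0r subr0.
Qed.


Definition gp (L : seq ('rV[A]_n * 'rV[A]_n)) : bool :=
  [&& pairwise (fun p p' => dot p.1 p'.1 == 0) L,
      pairwise (fun p p' => dot p.2 p'.2 == 0) L &
      all (fun p => (dot p.1 p.1 == dot p.2 p.2) && (dot p.1 p.1 \is a GRing.unit)) L].

Lemma witt L : gp L -> exists Q : 'M[A]_n, Q *m Q^T = 1%:M /\ forall p, p \in L -> p.1 *m Q = p.2.
Proof.
elim: L => [|[r y] L IH].
  by move=> _; exists 1%:M; split => //; rewrite trmx1 mulmx1.
rewrite /gp !pairwise_cons /= => /and3P [/andP [/allP h1 p1] /andP [/allP h2 p2]
   /andP [/andP [/eqP ery ur] a]].
have [Q1 [oQ1 hQ1]] := IH (introT and3P (And3 p1 p2 a)).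
have [Q2 [oQ2 z2 f2]] : exists Q2 : 'M[A]_n, [/\ Q2 *m Q2^T = 1%:M, (r *m Q1) *m Q2 = y &
    forall x, dot x (r *m Q1) = 0 -> dot x y = 0 -> x *m Q2 = x].
  by apply: reflect; rewrite dotQ.
exists (Q1 *m Q2); split; first exact: orth_mul.
move=> p; rewrite inE => /orP [/eqP -> /=|hp]; first by rewrite mulmxA.
rewrite mulmxA hQ1 // f2 //.
  by rewrite -(hQ1 p hp) dotQ // dotC; apply/eqP; exact: (h1 p hp).
by rewrite dotC; apply/eqP; exact: (h2 p hp).
Qed.

Lemma witt_final L (e : 'rV[A]_n) : gp L -> (forall p, p \in L -> dot e p.2 = 0) ->
  dot e e = 1 -> exists x, qf x = 1 /\ forall p, p \in L -> dot x p.1 = 0.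
Proof.
move=> gL he ee; have [Q [oQ hQ]] := witt gL.
have oQ' : Q^T *m Q = 1%:M by exact: mulmx1C.
exists (e *m Q^T); split.
  by rewrite qfE -(dotQ _ _ oQ) -mulmxA oQ' mulmx1.
move=> p hp; rewrite -(dotQ _ _ oQ) -mulmxA oQ' mulmx1 hQ //; exact: he.
Qed.


Definition supp (y : 'rV[A]_n) (a b : nat) : Prop :=
  forall i : 'I_n, ~~ ((a <= i) && (i < b))%N -> y 0 i = 0.

Lemma supp_dot y y' a b c : supp y a b -> supp y' b c -> dot y y' = 0.
Proof.
move=> h h'; rewrite dotE big1 // => i _.
have [hi|hi] := boolP ((a <= i) && (i < b))%N; last by rewrite h ?mul0r.
rewrite h' ?mulr0 //; case/andP: hi => _ hi; rewrite negb_and -ltnNge hi //.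
Qed.

Lemma supp_mono y a b a' b' : supp y a b -> (a' <= a)%N -> (b <= b')%N -> supp y a' b'.
Proof.
move=> h ha hb i hi; apply: h; apply: contra hi => /andP [h1 h2].
by rewrite (leq_trans ha h1) (leq_trans h2 hb).
Qed.

Lemma block_sum (z : nat -> A) (o P : nat) : (o + P <= n)%N ->
  \sum_(i < n) (if ((o <= i) && (i < o + P))%N then z (i - o)%N ^+ 2 else 0)
  = \sum_(l < P) z l ^+ 2.
Proof.
move=> hn.
pose G i := if ((o <= i) && (i < o + P))%N then z (i - o)%N ^+ 2 else 0.
rewrite -(big_mkord xpredT G) (@big_cat_nat _ _ _ o 0 n) ?(leq_trans _ hn) ?leq_addr //.
rewrite (@big_cat_nat _ _ _ (o + P) o n) ?leq_addr //=.
rewrite [X in X + _]big_nat_cond [X in _ + (_ + X)]big_nat_cond.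
rewrite big1; last by move=> i /andP [/andP [_ hi] _]; rewrite /G leqNgt hi.
rewrite [X in _ + (_ + X)]big1; last first.
  by move=> i /andP [/andP [hi _] _]; rewrite /G ltnNge hi andbF.
rewrite add0r addr0 -{1}(add0n o) big_addn addKn -(big_mkord xpredT (fun l => z l ^+ 2)).
rewrite big_nat_cond [RHS]big_nat_cond; apply: eq_bigr => i /andP [/andP [_ hi] _].
by rewrite /G leq_addl addnC ltn_add2l hi addKn.
Qed.

Lemma blocks P (E : seq 'rV[A]_n) o :
  (forall e, e \in E -> exists z : nat -> A, \sum_(l < P) z l ^+ 2 = dot e e) ->
  (o + P * size E <= n)%N ->
  exists L : seq ('rV[A]_n * 'rV[A]_n), [/\ map fst L = E,
    all (fun p => dot p.2 p.2 == dot p.1 p.1) L,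
    pairwise (fun p p' => dot p.2 p'.2 == 0) L &
    forall p, p \in L -> supp p.2 o (o + P * size E)].
Proof.
elim: E o => [|e E IH] o hz hn.
  by exists [::]; split.
have [z hze] := hz e (mem_head _ _).
have hn' : (o + P + P * size E <= n)%N by move: hn => /=; nia.
have [L [mL aL pL sL]] := IH (o + P) (fun e' he' => hz e' (mem_behead (s := e :: E) he')) hn'.
pose y := \row_(i < n) (if ((o <= i) && (i < o + P))%N then z (i - o)%N else 0).
have sy : supp y o (o + P) by move=> i hi; rewrite mxE (negPf hi).
exists ((e, y) :: L); split => /=.
- by rewrite mL.
- rewrite aL andbT -hze dotE -(block_sum z (leq_trans (leq_addr _ _) hn')).
  by apply/eqP; apply: eq_bigr => i _; rewrite !mxE; case: ifP; rewrite ?mulr0 // expr2.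
- rewrite pL andbT; apply/allP => p hp /=.
  by apply/eqP; apply: supp_dot sy (sL p hp).
- move=> p; rewrite inE => /orP [/eqP -> /=|hp].
    by apply: supp_mono sy _ _; rewrite // leq_add2l leq_pmulr.
  apply: supp_mono (sL p hp) _ _; first by rewrite leq_addr.
  by rewrite /=; nia.
Qed.


Lemma pyth_lift (hen : henselian pi) P (hP : pyth_bound k P) (e : 'rV[A]_n) :
  dot e e \is a GRing.unit -> exists z : nat -> A, \sum_(l < P) z l ^+ 2 = dot e e.
Proof.
move=> ue.
have [y hy] := hP n (fun i => pi (e 0 i)).
have /choice [g hg] : forall c : k, exists a : A, pi a = c by case: Hk.
pose z' (l : nat) := if insub l is Some i then g (y i) else 0 : A.
pose b := \sum_(l < P) z' l ^+ 2.
have pb : pi b = pi (dot e e).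
  rewrite pi_dot rmorph_sum -/(sum_sq _) hy; apply: eq_bigr => i _.
  by rewrite rmorphXn /z' valK hg.
have [l hl] : exists l, b * l ^+ 2 = dot e e.
  by apply: hensel_sq => //; rewrite pb -unitE.
exists (fun j => l * z' j); rewrite -hl /b mulr_suml; apply: eq_bigr => i _.
by rewrite exprMn mulrC.
Qed.

Lemma frame_ofam r (u : 'I_r -> 'rV[A]_n) : is_frame u -> ofam [seq u i | i <- enum 'I_r].
Proof.
case=> hu ho; apply/andP; split.
  rewrite pairwise_map; apply: (@sub_pairwise _ (fun i j : 'I_r => i != j)).
    by move=> i j /= hij; apply/eqP; apply/Bq0; exact: ho.
  by rewrite -uniq_pairwise enum_uniq.
apply/allP => x /mapP [i _ ->]; rewrite -qfE (hu i) unitr1 //.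
Qed.

Lemma frame_orth r (u : 'I_r -> 'rV[A]_n) x :
  (forall i, dot x (u i) = 0) -> orth (span_of u) x.
Proof.
move=> h y [c ->]; apply/Bq0; rewrite dot_sumr big1 // => i _.
by rewrite dotZr h mulr0.
Qed.

Lemma in_seq_frame r (u : 'I_r -> 'rV[A]_n) i : u i \in [seq u i | i <- enum 'I_r].
Proof. by apply: map_f; rewrite mem_enum. Qed.

Lemma main_sec (r s : nat) (u : 'I_r -> 'rV[A]_n) (v : 'I_s -> 'rV[A]_n)
  (Hu : is_frame u) (Hv : is_frame v) :
  [\/ (exists m, mA A = Some m /\ (m + r + 2 * s <= n)%N),
      (exists m, mA A = Some m /\ (m + r + s <= n)%N /\ formally_real k),
      (henselian pi /\
         match Pyth k with
         | Some p => (2 * p * r + s < n)%N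
         | None => r = 0%N /\ (s < n)%N
         end)
    | (henselian pi /\ formally_real k /\
         match Pyth k with
         | Some p => (p * r + s < n)%N
         | None => r = 0%N /\ (s < n)%N
         end)] ->
  exists x : 'rV[A]_n, [/\ orth (span_of u) x, orth (span_of v) x & unit_vector x].
Proof.
pose useq := [seq u i | i <- enum 'I_r].
pose vseq := [seq v i | i <- enum 'I_s].
have ou := frame_ofam Hu; have ov := frame_ofam Hv.
have su : size useq = r by rewrite size_map size_enum_ord.
have sv : size vseq = s by rewrite size_map size_enum_ord.
have caseM : forall m, mA A = Some m -> forall b, (m + r + b * s <= n)%N ->
    (forall E : seq 'rV[A]_n, (size E <= 2 * size vseq)%N ->
       (formally_real k -> (size E <= size vseq)%N) -> (size E <= b * s)%N) ->
    exists x : 'rV[A]_n, [/\ orth (span_of u) x, orth (span_of v) x & unit_vector x].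
  move=> m hm b hb hE.
  have [E [oE sE fE hEx]] := cut_many vseq ou.
  have [d [hd [B [hB1 hB2 hB3]]]] := basis oE.
  have md : (m <= d)%N by move: (hE E sE fE) hb hd; rewrite size_cat su; lia.
  have [x [hx ux]] := mA_some hm (W_qsub oE) (W_nonsing oE)
      (ex_intro _ d (conj (res_dim_basis hB1 hB2 hB3) md)).
  exists x; split => //.
  + apply: frame_orth => i; apply: (perp_catl hx); exact: in_seq_frame.
  + apply: frame_orth => i; apply: hEx hx _ (in_seq_frame v i).
have caseH : henselian pi -> forall P, (forall E : seq 'rV[A]_n, (size E <= 2 * size useq)%N ->
       (formally_real k -> (size E <= size useq)%N) ->
       (s + P * size E < n)%N /\ (0 < size E -> pyth_bound k P)%N) ->
    exists x : 'rV[A]_n, [/\ orth (span_of u) x, orth (span_of v) x & unit_vector x].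
  move=> hen P hP.
  have [E [oE sE fE hEx]] := cut_many useq ov.
  have [hsz hpb] := hP E sE fE.
  have hz1 : forall e, e \in vseq -> exists z : nat -> A, \sum_(l < 1) z l ^+ 2 = dot e e.
    move=> e he; exists (fun _ => 1).
    by rewrite big_ord1 expr1n; move/mapP: he => [i _ ->]; rewrite -qfE; case: Hv => hv _; rewrite hv.
  have hs1 : (0 + 1 * size vseq <= n)%N.
    by rewrite mul1n sv; apply: ltnW; apply: leq_ltn_trans hsz; rewrite leq_addr.
  have [L1 [m1 a1 p1 s1]] := @blocks 1 vseq 0 hz1 hs1.
  have hz2 : forall e, e \in E -> exists z : nat -> A, \sum_(l < P) z l ^+ 2 = dot e e.
    move=> e he; apply: pyth_lift => //.
      by apply: hpb; case: E he {oE sE fE hEx hsz} => //.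
    by move: oE; rewrite ofam_cat => /and3P [_ /andP [_ /allP h] _]; exact: h.
  have [L2 [m2 a2 p2 s2]] := @blocks P E s hz2 (ltnW hsz).
  have n0 : (n.-1 < n)%N by rewrite prednK ?leqnn //; apply: leq_ltn_trans hsz.
  pose e := delta_mx 0 (Ordinal n0) : 'rV[A]_n.
  have se : supp e n.-1 n.
    move=> i hi; rewrite mxE eqxx /=; case: eqP => // ei; exfalso.
    by move: hi; rewrite ei /= leqnn n0.
  have hL : map fst (L1 ++ L2) = vseq ++ E by rewrite map_cat m1 m2.
  have gL : gp (L1 ++ L2).
    apply/and3P; split.
    - by rewrite -(pairwise_map fst (fun a b => dot a b == 0)) hL; case/andP: oE.
    - rewrite pairwise_cat p1 p2 !andbT; apply/allrelP => p q hp hq; apply/eqP.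
      apply: supp_dot (s1 p hp) _; rewrite mul1n sv; exact: s2.
    - apply/allP => p hp; move: oE => /andP [_ /allP h].
      have hp1 : p.1 \in vseq ++ E by rewrite -hL; exact: map_f.
      rewrite h // andbT; rewrite mem_cat in hp; case/orP: hp => hp.
        by rewrite eq_sym; apply: (allP a1).
      by rewrite eq_sym; apply: (allP a2).
  have he2 : forall p, p \in L1 ++ L2 -> dot e p.2 = 0.
    move=> p hp; rewrite dotC; apply: supp_dot se; rewrite mem_cat in hp.
    case/orP: hp => hp.
      by apply: (supp_mono (s1 p hp) (a' := 0%N) (b' := n.-1)); rewrite ?mul1n ?sv //; move: hsz; lia.
    by apply: (supp_mono (s2 p hp) (a' := 0%N) (b' := n.-1)); move: hsz; lia.
  have ee : dot e e = 1 by rewrite dot_delta mxE !eqxx.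
  have [x [qx hx]] := witt_final gL he2 ee.
  have px : perp (vseq ++ E) x.
    by move=> y; rewrite -hL => /mapP [p hp ->]; exact: hx.
  exists x; split => //.
  + apply: frame_orth => i; apply: hEx px _ (in_seq_frame u i).
  + apply: frame_orth => i; apply: (perp_catl px); exact: in_seq_frame.
case.
- by move=> [m [hm hb]]; apply: (caseM m hm 2) => // E hE _; rewrite -sv.
- move=> [m [hm [hb fr]]]; apply: (caseM m hm 1); first by rewrite mul1n.
  by move=> E _ /(_ fr); rewrite mul1n sv.
- move=> [hen hp]; case eP : (Pyth k) hp => [p|] hp.
    apply: (caseH hen p) => E hE _; split; last by move=> _; exact: Pyth_some.
    rewrite su in hE; nia.
  apply: (caseH hen 0%N) => E hE _; case: hp => r0 hs; rewrite su r0 in hE.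
  by rewrite mul0n addn0; split => //; move: hE; rewrite muln0 leqn0 => /eqP ->.
- move=> [hen [fr hp]]; case eP : (Pyth k) hp => [p|] hp.
    apply: (caseH hen p) => E _ /(_ fr) hE; split; last by move=> _; exact: Pyth_some.
    rewrite su in hE; nia.
  apply: (caseH hen 0%N) => E _ /(_ fr) hE; case: hp => r0 hs; rewrite su r0 in hE.
  by rewrite mul0n addn0; split => //; move: hE; rewrite leqn0 => /eqP ->.
Qed.

End Main.

Theorem proposition2p10 (A : idomainType) (k : fieldType) (pi : {rmorphism A -> k})
  (HA : valuation_ring A) (Hk : residue_map pi)
  (H2 : (2%:R : A) \is a GRing.unit)
  (n r s : nat) (u : 'I_r -> 'rV[A]_n) (v : 'I_s -> 'rV[A]_n)
  (Hu : is_frame u) (Hv : is_frame v) :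
  [\/ (exists m, mA A = Some m /\ (m + r + 2 * s <= n)%N),
      (exists m, mA A = Some m /\ (m + r + s <= n)%N /\ formally_real k),
      (henselian pi /\
         match Pyth k with
         | Some p => (2 * p * r + s < n)%N
         | None => r = 0%N /\ (s < n)%N
         end)
    | (henselian pi /\ formally_real k /\
         match Pyth k with
         | Some p => (p * r + s < n)%N
         | None => r = 0%N /\ (s < n)%N
         end)] ->
  exists x : 'rV[A]_n, [/\ orth (span_of u) x, orth (span_of v) x & unit_vector x].
Proof.
move=> h; exact: (main_sec Hk H2 HA Hu Hv h).
Qed.
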